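(* For every $k\geq 4$, the group $\mathrm{PFB}_k$ is not virtually a product of two infinite groups.
   Context: $\mathrm{FB}_k=\langle \sigma_1,\ldots,\sigma_{k-1}\mid \sigma_i^2=1,\ [\sigma_i,\sigma_j]=1 \text{ whenever } |i-j|\ge 2\rangle$, and $\mathrm{PFB}_k$ is the kernel of the homomorphism $\mathrm{FB}_k\to\mathrm{Sym}(k)$ sending $\sigma_i$ to $(i,i+1)$. *)

(* Defs.v *)
From mathcomp Require Import all_boot.
Set Implicit Arguments. Unset Strict Implicit. Unset Printing Implicit Defensive.

(* Words in the generators sigma_1, ..., sigma_{k-1} of FB_k.
   The letter i : 'I_k.-1 stands for sigma_{i+1}. *)
Definition word (k : nat) := seq 'I_k.-1.

(* The congruence on words generated by the defining relations of FB_k: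
   sigma_i^2 = 1 and sigma_i sigma_j = sigma_j sigma_i for |i - j| >= 2.
   Since all generators are involutions, words modulo this congruence form
   exactly the group FB_k (product = concatenation, unit = [::],
   inverse = reversal). *)
Inductive fb_eq (k : nat) : word k -> word k -> Prop :=
| fb_refl (w : word k) : fb_eq w w
| fb_sym (u v : word k) : fb_eq u v -> fb_eq v u
| fb_trans (u v w : word k) : fb_eq u v -> fb_eq v w -> fb_eq u w
| fb_sq (u v : word k) (i : 'I_k.-1) : fb_eq (u ++ i :: i :: v) (u ++ v)
| fb_comm (u v : word k) (i j : 'I_k.-1) :
    (i.+2 <= j) || (j.+2 <= i) -> fb_eq (u ++ i :: j :: v) (u ++ j :: i :: v).
Arguments fb_eq {k}.

(* The transposition (i, i+1) of {0, ..., k-1} (0-indexed), acting on nat;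
   letter i (= sigma_{i+1}) maps to the transposition (i+1, i+2) in 1-indexed
   positions. *)
Definition swap (i x : nat) : nat :=
  if x == i then i.+1 else if x == i.+1 then i else x.

Definition word_act (k : nat) (w : word k) (x : nat) : nat :=
  foldr (fun (i : 'I_k.-1) y => swap i y) x w.

(* PFB_k: the kernel of FB_k -> Sym(k) (a saturated set of words). *)
Definition PFB (k : nat) (w : word k) : Prop :=
  forall x, x < k -> word_act w x = x.

(* A subgroup of FB_k, given as an fb_eq-saturated set of words. *)
Definition fb_subgroup (k : nat) (H : word k -> Prop) : Prop :=
  [/\ (forall u v, fb_eq u v -> H u -> H v),
      H [::],
      (forall u v, H u -> H v -> H (u ++ v)) &
      (forall u, H u -> H (rev u))].

Definition finite_index_in (k : nat) (G H : word k -> Prop) : Prop :=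
  exists ts : seq (word k),
    forall g, G g -> exists2 t, t \in ts & exists h, H h /\ fb_eq g (t ++ h).

(* A (as a set of group elements) is infinite: it meets infinitely many
   fb_eq-classes. *)
Definition infinite_elts (k : nat) (A : word k -> Prop) : Prop :=
  forall ts : seq (word k), exists a, A a /\ forall t, t \in ts -> ~ fb_eq a t.

Definition internal_direct_product (k : nat) (H A B : word k -> Prop) : Prop :=
  [/\ fb_subgroup A, fb_subgroup B,
      ((forall a, A a -> H a) /\ (forall b, B b -> H b)),
      ((forall a b, A a -> B b -> fb_eq (a ++ b) (b ++ a)) /\
       (forall x, A x -> B x -> fb_eq x [::])) &
      (forall h, H h -> exists a b, [/\ A a, B b & fb_eq h (a ++ b)])].

Definition virtually_product_of_two_infinite (k : nat) (G : word k -> Prop)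
  : Prop :=
  exists H A B : word k -> Prop,
    [/\ (fb_subgroup H /\ (forall h, H h -> G h)), finite_index_in G H,
        internal_direct_product H A B, infinite_elts A & infinite_elts B].

(* Main.v *)
Require Import Defs.
From mathcomp Require Import all_boot zify.
From Stdlib Require Import FunctionalExtensionality Classical IndefiniteDescription.
Set Implicit Arguments. Unset Strict Implicit. Unset Printing Implicit Defensive.

Definition far (i j : nat) := (i.+2 <= j) || (j.+2 <= i).
Definition inpair (j x : nat) := (x == j) || (x == j.+1).
Definition projn (s : seq nat) : nat -> seq nat := fun j => filter (inpair j) s.
Arguments projn : simpl never.
Definition frontb (i : nat) (P : nat -> seq nat) :=
  (ohead (P i) == Some i) && (ohead (P i.-1) == Some i).
Definition act (i : nat) (P : nat -> seq nat) : nat -> seq nat :=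
  fun j => if inpair j i then (if frontb i P then behead (P j) else i :: P j) else P j.
Definition evn (s : seq nat) := foldr act (fun _ => [::]) s.
Definition hitfirst (i : nat) (s : seq nat) := ohead [seq x <- s | ~~ far i x] == Some i.
Fixpoint canc (s : seq nat) := if s is i :: s' then hitfirst i s' || canc s' else false.

Lemma far_sym i j : far i j = far j i.
Proof. rewrite /far; lia. Qed.
Lemma far_irr i : far i i = false.
Proof. rewrite /far; lia. Qed.
Lemma inpair_far i j y : inpair j i -> far i y -> inpair j y = false.
Proof. rewrite /inpair /far; lia. Qed.

Lemma inpair_self i : inpair i i.
Proof. by rewrite /inpair eqxx. Qed.
Lemma inpair_pred i : inpair i.-1 i.
Proof. rewrite /inpair; case: i => //= i; by rewrite eqxx orbT. Qed.
Lemma inpairE j i : inpair j i = (j == i) || (j == i.-1).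
Proof. rewrite /inpair; case: i => [|i] /=; lia. Qed.

Lemma frontb_proj i s : frontb i (projn s) = hitfirst i s.
Proof.
elim: s => [|y s IH] //=.
rewrite /frontb /projn /hitfirst /= in IH *.
case Hf: (far i y) => /=.
  by rewrite (inpair_far (inpair_self i) Hf) (inpair_far (inpair_pred i) Hf).
case: (eqVneq y i) => [->|Hyi].
  by rewrite inpair_self inpair_pred /= eqxx.
have: [|| y == i.+1 | y.+1 == i] by move: Hf Hyi; rewrite /far; lia.
case/orP => [/eqP ->|/eqP <-] /=.
  rewrite /inpair eqxx orbT /=.
  have -> : (Some i.+1 == Some i) = false by apply/eqP => -[]; lia.
  by [].
rewrite inpair_self /=.
have -> : (Some y == Some y.+1) = false by apply/eqP => -[]; lia.
by rewrite andbF.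
Qed.

Lemma hitfirst_cons i y s :
  hitfirst i (y :: s) = if far i y then hitfirst i s else y == i.
Proof.
rewrite /hitfirst /=; case: (far i y) => //=.
Qed.

Lemma act_cons i P : ~~ frontb i P ->
  act i P = fun j => if inpair j i then i :: P j else P j.
Proof. by move/negbTE=> H; apply: functional_extensionality => j; rewrite /act H. Qed.

Lemma act_del i P : frontb i P ->
  act i P = fun j => if inpair j i then behead (P j) else P j.
Proof. by move=> H; apply: functional_extensionality => j; rewrite /act H. Qed.

Lemma projn_cons i s :
  projn (i :: s) = fun j => if inpair j i then i :: projn s j else projn s j.
Proof. by apply: functional_extensionality => j; rewrite /projn /=. Qed.

Lemma red_evn s : ~~ canc s -> evn s = projn s.
Proof.
elim: s => [|i s IH] /=.
  by move=> _; apply: functional_extensionality.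
rewrite negb_or => /andP [Hh Hc].
rewrite IH // act_cons ?frontb_proj // projn_cons //.
Qed.

Lemma proj_rem i s : hitfirst i s -> forall j,
  projn (rem i s) j = if inpair j i then behead (projn s j) else projn s j.
Proof.
elim: s => [|y s IH] //= H j.
rewrite hitfirst_cons in H.
case: (eqVneq y i) => [->|Hyi].
  by rewrite projn_cons /=; case: (inpair j i).
have Hf : far i y by move: H; case: (far i y) => //; rewrite (negbTE Hyi).
rewrite Hf in H.
rewrite !projn_cons /= IH //.
case Hji: (inpair j i) => //.
by rewrite (inpair_far Hji Hf).
Qed.

Lemma act_hit i s : hitfirst i s -> act i (projn s) = projn (rem i s).
Proof.
move=> H; rewrite act_del ?frontb_proj //.
by apply: functional_extensionality => j; rewrite proj_rem.
Qed.

Lemma rem_red i s : hitfirst i s -> ~~ canc s -> ~~ canc (rem i s) && ~~ hitfirst i (rem i s).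
Proof.
elim: s => [|y s IH] //=.
rewrite hitfirst_cons.
case: (eqVneq y i) => [->|Hyi].
  by move=> _; rewrite negb_or andbC.
case Hf: (far i y); last by [].
move=> H; rewrite negb_or => /andP [Hy Hc].
have /andP [H1 H2] := IH H Hc.
rewrite /= hitfirst_cons Hf H2 andbT negb_or H1 andbT.
move: Hy; rewrite /hitfirst.
have E : forall t, [seq x <- rem i t | ~~ far y x] = [seq x <- t | ~~ far y x].
  elim=> [|z t IHt] //=.
  case: (eqVneq z i) => [->|Hz]; first by rewrite far_sym Hf.
  by rewrite /= IHt.
by rewrite E.
Qed.

Lemma proj_cons_rem i s : hitfirst i s -> projn (i :: rem i s) = projn s.
Proof.
move=> H; rewrite projn_cons; apply: functional_extensionality => j.
rewrite proj_rem //; case Hji: (inpair j i) => //.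
move: H; rewrite -frontb_proj /frontb => /andP [/eqP H1 /eqP H2].
move: Hji; rewrite inpairE => /orP [] /eqP ->.
  by case: (projn s i) H1 => //= a l [->].
by case: (projn s i.-1) H2 => //= a l [->].
Qed.

Definition Rinv (P : nat -> seq nat) := exists s, ~~ canc s /\ P = projn s.

Lemma act_hit_true i s : hitfirst i (i :: s).
Proof. by rewrite hitfirst_cons far_irr. Qed.

Lemma Rinv_act i P : Rinv P -> Rinv (act i P) /\ act i (act i P) = P.
Proof.
case=> s [Hs ->].
case H: (hitfirst i s).
  have /andP [H1 H2] := rem_red H Hs.
  rewrite act_hit //; split; first by exists (rem i s).
  rewrite act_cons ?frontb_proj // -projn_cons.
  exact: proj_cons_rem.
have E : act i (projn s) = projn (i :: s).
  by rewrite act_cons ?frontb_proj ?H // projn_cons.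
rewrite E; split; first by exists (i :: s); rewrite /= H.
by rewrite act_hit ?act_hit_true //= eqxx.
Qed.

Lemma act_comm i j P : far i j -> act i (act j P) = act j (act i P).
Proof.
move=> Hf; apply: functional_extensionality => x.
have Hf' : far j i by rewrite far_sym.
have F1 : frontb i (act j P) = frontb i P.
  rewrite /frontb /act (inpair_far (inpair_self i) Hf) (inpair_far (inpair_pred i) Hf) //.
have F2 : frontb j (act i P) = frontb j P.
  rewrite /frontb /act (inpair_far (inpair_self j) Hf') (inpair_far (inpair_pred j) Hf') //.
rewrite /act F1 F2.
case Hxi: (inpair x i); case Hxj: (inpair x j) => //.
move: Hxi Hxj; rewrite !inpairE => A B; move: Hf; rewrite /far; lia.
Qed.

Lemma Rinv_evn s : Rinv (evn s).
Proof.
elim: s => [|i s IH] /=; first by exists [::].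
by case: (Rinv_act i IH).
Qed.

Lemma evn_cat s1 s2 : evn (s1 ++ s2) = foldr act (evn s2) s1.
Proof. by rewrite /evn foldr_cat. Qed.

Lemma fb_evn k (u v : word k) : fb_eq u v -> evn (map val u) = evn (map val v).
Proof.
elim=> {u v} [w|u v _ IH|u v w _ IH1 _ IH2|u v i|u v i j H] //.
- by rewrite IH1 IH2.
- rewrite !map_cat !evn_cat /=.
  by case: (Rinv_act (val i) (Rinv_evn (map val v))) => _ ->.
- rewrite !map_cat !evn_cat /= act_comm //.
Qed.

Lemma fb_catl k (c a b : word k) : fb_eq a b -> fb_eq (c ++ a) (c ++ b).
Proof.
elim=> {a b} [w|u v _ IH|u v w _ IH1 _ IH2|u v i|u v i j H].
- exact: fb_refl.
- exact: fb_sym IH.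
- exact: fb_trans IH1 IH2.
- rewrite !catA; exact: fb_sq.
- rewrite !catA; exact: fb_comm.
Qed.

Lemma fb_catr k (c a b : word k) : fb_eq a b -> fb_eq (a ++ c) (b ++ c).
Proof.
elim=> {a b} [w|u v _ IH|u v w _ IH1 _ IH2|u v i|u v i j H].
- exact: fb_refl.
- exact: fb_sym IH.
- exact: fb_trans IH1 IH2.
- rewrite -!catA /=; exact: fb_sq.
- rewrite -!catA /=; exact: fb_comm.
Qed.

Lemma fb_cat k (a a' b b' : word k) : fb_eq a a' -> fb_eq b b' -> fb_eq (a ++ b) (a' ++ b').
Proof. move=> H1 H2; apply: fb_trans (fb_catr _ H1) (fb_catl _ H2). Qed.

Lemma rev2 T (x y : T) v : rev [:: x, y & v] = rev v ++ [:: y; x].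
Proof. by rewrite -[[:: x, y & v]]/([:: x; y] ++ v) rev_cat. Qed.

Lemma fb_rev k (a b : word k) : fb_eq a b -> fb_eq (rev a) (rev b).
Proof.
elim=> {a b} [w|u v _ IH|u v w _ IH1 _ IH2|u v i|u v i j H].
- exact: fb_refl.
- exact: fb_sym IH.
- exact: fb_trans IH1 IH2.
- by rewrite !rev_cat rev2 -catA /=; exact: fb_sq.
- rewrite !rev_cat !rev2 -!catA /=; apply: fb_sym; apply: fb_comm.
  by [].
Qed.

Lemma fb_revK k (w : word k) : fb_eq (rev w ++ w) [::].
Proof.
elim: w => [|y w IH] /=; first exact: fb_refl.
rewrite rev_cons -cats1 -catA /=.
apply: fb_trans IH; exact: fb_sq.
Qed.

Lemma fb_revK' k (w : word k) : fb_eq (w ++ rev w) [::].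
Proof. by have := fb_revK (rev w); rewrite revK. Qed.

Lemma hit_mem i s : hitfirst i s -> i \in s.
Proof.
rewrite /hitfirst; case E: [seq x <- s | ~~ far i x] => [|a l] //= /eqP [Ha].
have: a \in [seq x <- s | ~~ far i x] by rewrite E mem_head.
by rewrite mem_filter Ha => /andP [].
Qed.

Lemma hit_rem k (y : 'I_k.-1) (w : word k) :
  hitfirst (val y) (map val w) -> fb_eq (y :: w) (rem y w).
Proof.
elim: w => [|z w IH] //= H.
rewrite hitfirst_cons in H.
case: (eqVneq z y) => [->|Hzy].
  exact: (fb_sq [::] w y).
have Hf : far (val y) (val z).
  move: H; case: (far _ _) => // /eqP E.
  by case/eqP: Hzy; apply: val_inj.
rewrite Hf in H.
apply: (@fb_trans _ _ (z :: y :: w)); first exact: (@fb_comm _ [::] w y z Hf).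
exact: (fb_catl [:: z] (IH H)).
Qed.

Lemma canc_short k (w : word k) :
  canc (map val w) -> exists w', fb_eq w w' /\ size w' < size w.
Proof.
elim: w => [|y w IH] //= /orP [H|H].
  exists (rem y w); split; first exact: hit_rem.
  have : y \in w by rewrite -(mem_map val_inj); exact: hit_mem.
  by move/size_rem => ->; case: (size w).
case: (IH H) => w' [H1 H2]; exists (y :: w'); split => //.
exact: (fb_catl [:: y] H1).
Qed.

Definition red k (w : word k) := ~~ canc (map val w).

Lemma exists_red k (w : word k) :
  exists w', [/\ fb_eq w w', red w' & size w' <= size w].
Proof.
move: {2}(size w) (leqnn (size w)) => n; elim: n w => [|n IH] w Hw.
  by case: w Hw => // _; exists [::]; split => //; exact: fb_refl.
case H: (canc (map val w)).
  case: (canc_short H) => w' [H1 H2].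
  case: (IH w') => [|w'' [H3 H4 H5]]; first by move: H2 Hw; lia.
  exists w''; split => //; [exact: fb_trans H1 H3 | move: H2 H5; lia].
by exists w; split => //; [exact: fb_refl | rewrite /red H].
Qed.

Lemma evn_nil k (w : word k) : evn (map val w) = evn [::] -> fb_eq w [::].
Proof.
move=> H; case: (exists_red w) => w' [H1 H2 _].
have E0 : evn (map val w') = evn [::] by rewrite -(fb_evn H1).
apply: fb_trans H1 _.
move: E0; rewrite red_evn //.
case: w' {H2} => [|y w'] E; first exact: fb_refl.
have := congr1 (fun P => P (val y)) E.
by rewrite projn_cons /= inpair_self.
Qed.

Lemma evn_fb k (u v : word k) : evn (map val u) = evn (map val v) -> fb_eq u v.
Proof.
move=> H.
have H1 : fb_eq (rev u ++ v) [::].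
  apply: evn_nil; rewrite map_cat evn_cat -H -evn_cat -map_cat.
  exact: (fb_evn (fb_revK u)).
apply: fb_sym; apply: fb_trans (fb_catr v (fb_sym (fb_revK' u))) _.
rewrite -catA; have := fb_catl u H1; by rewrite cats0.
Qed.

Lemma red_proj k (u v : word k) : red u -> red v -> fb_eq u v ->
  projn (map val u) = projn (map val v).
Proof. by move=> Hu Hv H; rewrite -!red_evn //; exact: fb_evn. Qed.

Lemma red_hit k (u v : word k) a : red u -> red v -> fb_eq u v ->
  hitfirst a (map val u) = hitfirst a (map val v).
Proof. by move=> Hu Hv H; rewrite -!frontb_proj (red_proj Hu Hv H). Qed.

Lemma red_size k (u v : word k) : red u -> red v -> fb_eq u v -> size u = size v.
Proof.
move=> Hu Hv H; rewrite -(size_map val u) -(size_map val v); apply: perm_size.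
have E := red_proj Hu Hv H.
apply/allP => x _; apply/eqP.
have C : forall s, count_mem x s = count_mem x (projn s x).
  by move=> s; rewrite /projn count_filter; apply: eq_count => y /=;
     case: eqP => //= ->; rewrite inpair_self.
by rewrite C E -C.
Qed.

Lemma red_len k (x y : word k) : red x -> fb_eq x y -> size y = size x -> red y.
Proof.
move=> Hx H Hs; apply/negP => Hc.
case: (canc_short Hc) => y' [H1 H2].
case: (exists_red y') => z [H3 H4 H5].
have := red_size Hx H4 (fb_trans H (fb_trans H1 H3)).
move: H2 H5 Hs; lia.
Qed.

Lemma hitP i s : reflect (exists b c, s = b ++ i :: c /\ all (far i) b) (hitfirst i s).
Proof.
apply: (iffP idP).
  elim: s => [|y s IH] //; rewrite hitfirst_cons.
  case Hf: (far i y).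
    by case/IH => b [c [-> Hb]]; exists (y :: b), c; rewrite /= Hf.
  by move/eqP=> ->; exists [::], s.
case=> b [c [-> Hb]]; elim: b Hb => [|y b IH] /=.
  by rewrite act_hit_true.
by move/andP=> [Hy Hb]; rewrite hitfirst_cons Hy IH.
Qed.

Lemma cancP s : reflect (exists a i b c, s = a ++ i :: b ++ i :: c /\ all (far i) b) (canc s).
Proof.
apply: (iffP idP).
  elim: s => [|y s IH] //= /orP [/hitP [b [c [-> Hb]]]|/IH [a [i [b [c [-> Hb]]]]]].
    by exists [::], y, b, c.
  by exists (y :: a), i, b, c.
case=> a [i [b [c [-> Hb]]]]; elim: a => [|y a IH] /=.
  by apply/orP; left; apply/hitP; exists b, c.
by rewrite IH orbT.
Qed.

Lemma canc_rev s : canc (rev s) = canc s.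
Proof.
have H : forall t, canc t -> canc (rev t).
  move=> t /cancP [a [i [b [c [-> Hb]]]]]; apply/cancP.
  exists (rev c), i, (rev b), (rev a); split; last by rewrite all_rev.
  by rewrite !(rev_cat, rev_cons) -!cats1 -!catA.
by apply/idP/idP => /H //; rewrite revK.
Qed.

Lemma red_rev k (w : word k) : red (rev w) = red w.
Proof. by rewrite /red map_rev canc_rev. Qed.

Lemma red_behead k (a : 'I_k.-1) (w : word k) : red (a :: w) -> red w.
Proof. by rewrite /red /= negb_or => /andP []. Qed.

Definition adj (x y : nat) := (x == y.+1) || (y == x.+1).

Lemma adj_far x y : adj x y -> far x y = false.
Proof. rewrite /adj /far; lia. Qed.
Lemma adj_neq x y : adj x y -> (y == x) = false.
Proof. rewrite /adj; lia. Qed.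
Lemma adj_sym x y : adj x y = adj y x.
Proof. by rewrite /adj orbC. Qed.

Lemma chain_red s : sorted adj s -> ~~ canc s.
Proof.
elim: s => [|c s IH] //= Hs.
rewrite negb_or IH ?(path_sorted Hs) // andbT.
case: s Hs {IH} => [|d s] /=; first by rewrite /hitfirst.
by case/andP => Hcd _; rewrite hitfirst_cons adj_far // adj_neq.
Qed.

Lemma hit_chain c C z b : sorted adj (c :: C) -> b \in c :: C ->
  hitfirst b ((c :: C) ++ z) -> b = c.
Proof.
elim: C c => [|d C IH] c /=.
  by move=> _; rewrite inE => /eqP.
case/andP => Hcd HC; rewrite inE => /orP [/eqP //|Hb].
case: (eqVneq b c) => // Hbc.
rewrite hitfirst_cons.
case Hf: (far b c); last by move/eqP => E; move: Hbc; rewrite E eqxx.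
move=> H; have E := IH d HC Hb H.
by move: Hf; rewrite E far_sym adj_far.
Qed.

Lemma hit_adj a s : hitfirst a s -> hitfirst a.+1 s -> False.
Proof.
elim: s => [|y s IH] //; rewrite !hitfirst_cons.
case Hf1: (far a y); case Hf2: (far a.+1 y); move: Hf1 Hf2; rewrite /far => Hf1 Hf2.
- exact: IH.
- move=> _ /eqP E; lia.
- move=> /eqP E _; lia.
- move=> /eqP E1 /eqP E2; lia.
Qed.

Lemma map_rem_val k (a : 'I_k.-1) (s : word k) : map val (rem a s) = rem (val a) (map val s).
Proof.
elim: s => [|y s IH] //=.
by rewrite val_eqE; case: (y == a) => //=; rewrite IH.
Qed.

Lemma fb_cancel1 k (a : 'I_k.-1) (u v : word k) : fb_eq (a :: u) (a :: v) -> fb_eq u v.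
Proof.
move=> H.
apply: fb_trans (fb_sym (fb_sq [::] u a)) _.
apply: fb_trans (fb_sq [::] v a).
exact: (fb_catl [:: a] H).
Qed.

Lemma chain_mul k (C y : word k) : sorted adj (map val C) -> red y ->
  exists C1 C2 z, [/\ C = C1 ++ C2, fb_eq y (rev C2 ++ z),
                     size y = size C2 + size z & red (C1 ++ z)].
Proof.
elim: C => [|a C IH] Hs Hy.
  by exists [::], [::], y; split => //; exact: fb_refl.
have HC : sorted adj (map val C) by exact: (path_sorted Hs).
case: (IH HC Hy) => C1 [C2 [z [E1 E2 E3 E4]]].
case: C1 E1 E4 => [|c C1] E1 E4.
  case H: (hitfirst (val a) (map val z)).
    exists [::], (a :: C2), (rem a z); split.
    - by rewrite E1.
    - apply: fb_trans E2 _; rewrite rev_cons -cats1 -catA /=.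
      apply: fb_catl; apply: fb_trans (fb_sym (fb_sq [::] z a)) _.
      exact: (fb_catl [:: a] (hit_rem H)).
    - have Ha : a \in z by rewrite -(mem_map val_inj); exact: hit_mem.
      rewrite E3 /= (size_rem Ha).
      by case: (z) Ha => //= b z' _; rewrite addnS.
    - rewrite /= /red map_rem_val.
      by case/andP: (rem_red H E4).
  exists [:: a], C2, z; split => //.
  - by rewrite E1.
  - by rewrite /red /= H.
exists (a :: c :: C1), C2, z; split => //.
- by rewrite E1.
- move: Hs; rewrite E1 /= => /andP [Hac _].
  by rewrite /red /= hitfirst_cons adj_far // adj_neq // -[_ || _]/(canc (map val ((c :: C1) ++ z))) E4.
Qed.

Lemma chain_uniq k (W V : word k) : sorted adj (map val W) -> red V -> fb_eq V W -> V = W.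
Proof.
elim: W V => [|w W IH] V HW HV H.
  by have := red_size HV (chain_red HW) H; case: V {HV H}.
case: V HV H => [|v V] HV H.
  by have := red_size HV (chain_red HW) H.
have Hh : hitfirst (val v) (map val (w :: W)).
  by rewrite -(red_hit (val v) HV (chain_red HW) H) /=; exact: act_hit_true.
have Hm : val v \in map val (w :: W) by exact: hit_mem.
have E : val v = val w.
  by apply: (@hit_chain (val w) (map val W) [::] (val v) HW Hm); rewrite cats0.
have E' : v = w by apply: val_inj.
rewrite E'; congr (_ :: _); apply: IH.
- exact: path_sorted HW.
- exact: red_behead HV.
- rewrite E' in H; exact: fb_cancel1 H.
Qed.

Lemma chain_rev s : sorted adj s -> sorted adj (rev s).
Proof.
rewrite rev_sorted; apply: sub_sorted => x y; by rewrite adj_sym.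
Qed.

Definition wpow T (w : seq T) n := flatten (nseq n w).

Lemma wpowS T (w : seq T) n : wpow w n.+1 = w ++ wpow w n.
Proof. by []. Qed.

Lemma wpowD T (w : seq T) a b : wpow w (a + b) = wpow w a ++ wpow w b.
Proof. by rewrite /wpow nseqD flatten_cat. Qed.

Lemma wpowM T (w : seq T) a b : wpow (wpow w a) b = wpow w (a * b).
Proof.
elim: b => [|b IH]; first by rewrite muln0.
by rewrite wpowS IH mulnS wpowD.
Qed.

Lemma comm_pow k (x h : word k) M :
  fb_eq (x ++ h) (h ++ x) -> fb_eq (x ++ wpow h M) (wpow h M ++ x).
Proof.
move=> H; elim: M => [|M IH] /=; first by rewrite cats0; exact: fb_refl.
rewrite wpowS catA; apply: fb_trans (fb_catr _ H) _.
rewrite -!catA; exact: fb_catl.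
Qed.

Lemma comm_rev k (x h : word k) :
  fb_eq (x ++ h) (h ++ x) -> fb_eq (x ++ rev h) (rev h ++ x).
Proof.
move=> H.
have S1 : fb_eq x (x ++ h ++ rev h).
  by have := fb_catl x (fb_sym (fb_revK' h)); rewrite cats0.
have S2 : fb_eq (x ++ h ++ rev h) (h ++ x ++ rev h).
  by rewrite catA (catA h); exact: fb_catr _ H.
have S3 : fb_eq (rev h ++ h ++ x ++ rev h) (x ++ rev h).
  by have := fb_catr (x ++ rev h) (fb_revK h); rewrite -catA.
apply: fb_sym; apply: fb_trans (fb_catl (rev h) (fb_trans S1 S2)) S3.
Qed.

Lemma fb_cat_inv k (c u v : word k) : fb_eq (c ++ u) (c ++ v) -> fb_eq u v.
Proof.
elim: c => [|a c IH] //= H; apply: IH; exact: fb_cancel1 H.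
Qed.

Definition pp (k' : nat) := 2 * k' + 4.
Definition ff k' (j : nat) := minn (j %% pp k') (pp k' - j %% pp k').
Definition seg k' (i a : nat) : word k'.+4 :=
  [seq (inord (ff k' j) : 'I_k'.+3) | j <- iota i a].

Lemma pp_gt0 k' : 0 < pp k'.
Proof. rewrite /pp; lia. Qed.

Lemma ff_lt k' j : ff k' j < k'.+3.
Proof. have := ltn_pmod j (pp_gt0 k'); rewrite /ff /pp; lia. Qed.

Lemma seg_val k' i a : map val (seg k' i a) = map (ff k') (iota i a).
Proof. by rewrite -map_comp; apply: eq_map => j /=; rewrite inordK // ff_lt. Qed.

Lemma size_seg k' i a : size (seg k' i a) = a.
Proof. by rewrite size_map size_iota. Qed.

Lemma seg_cat k' i a b : seg k' i (a + b) = seg k' i a ++ seg k' (i + a) b.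
Proof. by rewrite /seg iotaD map_cat. Qed.

Lemma seg_cons k' i a : seg k' i a.+1 = inord (ff k' i) :: seg k' i.+1 a.
Proof. by []. Qed.

Lemma ff_per k' K j : ff k' (K * pp k' + j) = ff k' j.
Proof. by rewrite /ff !modnMDl. Qed.

Lemma seg_per k' K i a : seg k' (i + K * pp k') a = seg k' i a.
Proof.
rewrite /seg addnC iotaDl -map_comp; apply: eq_map => j /=.
by rewrite ff_per.
Qed.

Lemma ff0 k' : ff k' 0 = 0.
Proof. by rewrite /ff mod0n min0n. Qed.

Lemma ff1 k' : ff k' 1 = 1.
Proof. rewrite /ff modn_small /pp; lia. Qed.

Lemma ff_zero k' j : (ff k' j == 0) = (pp k' %| j).
Proof.
have := ltn_pmod j (pp_gt0 k'); rewrite /dvdn /ff; lia.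
Qed.

Lemma modS_cases j P : 0 < P ->
  (j.+1 %% P = (j %% P).+1 /\ (j %% P).+1 < P) \/ (j.+1 %% P = 0 /\ (j %% P).+1 = P).
Proof.
move=> HP; have Ha := ltn_pmod j HP.
rewrite -addn1 -modnDml.
case: (ltngtP (j %% P).+1 P) => H.
- by left; rewrite addn1 modn_small.
- lia.
- by right; rewrite addn1 H modnn.
Qed.

Lemma ff_adj k' j : adj (ff k' j) (ff k' j.+1).
Proof.
have Ha := ltn_pmod j (pp_gt0 k').
rewrite /ff /adj; case: (modS_cases j (pp_gt0 k')) => [[-> H]|[-> H]];
  move: Ha H; rewrite /pp; lia.
Qed.

Lemma seg_chain k' i a : sorted adj (map val (seg k' i a)).
Proof.
rewrite seg_val; elim: a i => [|a IH] i //=.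
case: a IH => [|a] IH //=.
by rewrite ff_adj /=; exact: (IH i.+1).
Qed.

Lemma ff_hit k' v i : v < k'.+3 -> exists j, i <= j < i + pp k' /\ ff k' j = v.
Proof.
move=> Hv.
have [j [Hj1 Hj2]] : exists j, i <= j < i + pp k' /\ j %% pp k' = v.
  elim: i => [|i [j [Hj1 Hj2]]].
    exists v; split; first by rewrite /pp; lia.
    by rewrite modn_small // /pp; lia.
  case: (ltngtP i j) => H.
  - by exists j; split => //; lia.
  - lia.
  - exists (j + pp k'); split; first by move: Hj1; rewrite /pp; lia.
    by rewrite modnDr.
exists j; split => //; rewrite /ff Hj2; move: Hv; rewrite /pp; lia.
Qed.

Lemma seg_mem k' v i N : v < k'.+3 -> pp k' <= N -> v \in map val (seg k' i N).
Proof.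
move=> Hv HN; case: (ff_hit i Hv) => j [Hj <-].
rewrite seg_val; apply: map_f; rewrite mem_iota; lia.
Qed.

Lemma wpow_seg k' i n M : wpow (seg k' i (n * pp k')) M = seg k' i (M * (n * pp k')).
Proof.
elim: M => [|M IH] //.
by rewrite wpowS IH mulSn seg_cat seg_per.
Qed.

Lemma prefix_seg k' i L (A B : word k'.+4) : seg k' i L = A ++ B ->
  A = seg k' i (size A) /\ B = seg k' (i + size A) (size B).
Proof.
move=> E.
have HL : L = size A + size B by rewrite -size_cat -E size_seg.
move: E; rewrite HL seg_cat => /eqP; rewrite eqseq_cat ?size_seg //.
by case/andP => /eqP E1 /eqP E2; split; rewrite ?E1 ?E2.
Qed.

Lemma seg_inj k' (u v : word k'.+4) : map val u = map val v -> u = v.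
Proof. exact: (inj_map val_inj). Qed.

Lemma rev_seg0 k' : rev (seg k' 0 (pp k')) = seg k' 1 (pp k').
Proof.
apply: seg_inj; rewrite map_rev !seg_val.
apply: (@eq_from_nth _ 0); first by rewrite size_rev !size_map !size_iota.
rewrite size_rev size_map size_iota => q Hq.
rewrite nth_rev ?size_map ?size_iota // !(nth_map 0) ?size_iota //; try lia.
rewrite !nth_iota; try lia.
rewrite /ff add0n add1n [(pp k' - q.+1) %% _]modn_small; last by lia.
case: (ltngtP q.+1 (pp k')) => H.
- rewrite modn_small //; lia.
- lia.
- rewrite H modnn; lia.
Qed.

Lemma rev_seg k' j : rev (seg k' 0 (j * pp k')) = seg k' 1 (j * pp k').
Proof.
elim: j => [|j IH] //.
rewrite mulSn seg_cat add0n rev_cat.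
have E1 := seg_per k' 1 0 (j * pp k'); rewrite mul1n add0n in E1.
rewrite E1 IH rev_seg0 addnC seg_cat.
by rewrite (seg_per k' j 1).
Qed.

Lemma val_inord_ff k' j : val (inord (ff k' j) : 'I_k'.+3) = ff k' j.
Proof. by rewrite /= inordK // ff_lt. Qed.

Lemma strip k' i N (u w y : word k'.+4) : size u + pp k' <= N ->
  red (seg k' i N ++ y) -> red (u ++ w) -> fb_eq (seg k' i N ++ y) (u ++ w) ->
  u = seg k' i (size u).
Proof.
elim: u i N => [|b u IH] i N //= HN H1 H2 H.
case: N HN H1 H => [|N] HN H1 H; first by move: HN; rewrite /pp; lia.
have Hh : hitfirst (val b) (map val (seg k' i N.+1 ++ y)).
  rewrite (red_hit (val b) H1 H2 H) /=; exact: act_hit_true.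
have Hm : val b \in map val (seg k' i N.+1).
  apply: seg_mem; [exact: ltn_ord | lia].
have Eb : val b = ff k' i.
  move: Hh Hm; rewrite map_cat seg_val /= => Hh Hm.
  apply: (@hit_chain (ff k' i) (map (ff k') (iota i.+1 N)) (map val y) (val b)) => //.
  by have := seg_chain k' i N.+1; rewrite seg_val.
have -> : b = inord (ff k' i) by apply: val_inj; rewrite val_inord_ff.
rewrite seg_cons; congr (_ :: _).
rewrite seg_cons in H1 H.
have Eb' : b = inord (ff k' i) by apply: val_inj; rewrite val_inord_ff.
rewrite -Eb' in H1 H.
apply: (IH i.+1 N _ (red_behead H1) (red_behead H2) (fb_cancel1 H)).
by move: HN; rewrite addSn ltnS.
Qed.

Lemma key k' i n (x : word k'.+4) : 0 < n -> red x ->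
  fb_eq (x ++ seg k' i (n * pp k')) (seg k' i (n * pp k') ++ x) ->
  exists m t, m + t = size x /\ fb_eq x (seg k' i m ++ rev (seg k' i t)).
Proof.
move=> Hn Hx Hc.
have Hc2 := comm_pow (size x).+2 Hc.
rewrite wpow_seg in Hc2.
have HL : 2 * size x + pp k' <= (size x).+2 * (n * pp k').
  have H4 : 4 <= pp k' by rewrite /pp; lia.
  nia.
move: HL Hc2; set L := (size x).+2 * (n * pp k') => HL Hc2.
have Hcc : sorted adj (map val (seg k' i L)) := seg_chain k' i L.
case: (chain_mul Hcc Hx) => C1' [C2' [z' [E1 E2 E3 E4]]].
have Hrc : sorted adj (map val (rev (seg k' i L))) by rewrite map_rev; exact: chain_rev.
have Hrx : red (rev x) by rewrite red_rev.
case: (chain_mul Hrc Hrx) => C1 [C2 [z [F1 F2 F3 F4]]].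
have W1 : fb_eq (seg k' i L ++ x) (C1' ++ z').
  rewrite E1 -catA; apply: fb_catl.
  apply: fb_trans (fb_catl C2' E2) _.
  by rewrite catA; have := fb_catr z' (fb_revK' C2').
have Hx' : fb_eq x (rev z ++ C2) by have := fb_rev F2; rewrite revK rev_cat revK.
have Ec : seg k' i L = rev C2 ++ rev C1 by rewrite -[seg k' i L]revK F1 rev_cat.
have W2 : fb_eq (x ++ seg k' i L) (rev z ++ rev C1).
  rewrite Ec; apply: fb_trans (fb_catr _ Hx') _.
  rewrite -!catA; apply: fb_catl; rewrite catA.
  by have := fb_catr (rev C1) (fb_revK' C2).
have W : fb_eq (C1' ++ z') (rev z ++ rev C1).
  apply: fb_trans (fb_sym W1) _; exact: fb_trans (fb_sym Hc2) W2.
have [P1 _] := prefix_seg E1.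
have HC : size C1' + size C2' = L by rewrite -size_cat -E1 size_seg.
have Hzx : size z <= size x by move: F3; rewrite size_rev; lia.
have Hu : rev z = seg k' i (size (rev z)).
  apply: (@strip k' i (size C1') _ (rev C1) z').
  - rewrite size_rev; lia.
  - by rewrite -P1.
  - by rewrite -rev_cat red_rev.
  - by rewrite -P1.
have [Q1 _] := prefix_seg Ec.
exists (size z), (size C2); split; first by move: F3; rewrite size_rev; lia.
move: Hx'; rewrite Hu size_rev -[C2]revK Q1 size_rev.
by rewrite size_rev size_seg.
Qed.

Lemma rev_seg_cons k' i a :
  rev (seg k' i a.+1) = (inord (ff k' (i + a)) : 'I_k'.+3) :: rev (seg k' i a).
Proof. have -> : a.+1 = a + 1 by rewrite addn1. by rewrite seg_cat rev_cat. Qed.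

Lemma head_seg k' i a (w : word k'.+4) :
  ohead (map val (seg k' i a.+1 ++ w)) = Some (ff k' i).
Proof. by rewrite seg_cons /= val_inord_ff. Qed.

Lemma head_rev_seg k' i a (w : word k'.+4) :
  ohead (map val (rev (seg k' i a.+1) ++ w)) = Some (ff k' (i + a)).
Proof. by rewrite rev_seg_cons /= val_inord_ff. Qed.

Lemma hit_head (s : seq nat) a : ohead s = Some a -> hitfirst a s.
Proof. by case: s => //= b s [->]; exact: act_hit_true. Qed.

Lemma ff_div k' j : ff k' j = 0 -> j = (j %/ pp k') * pp k'.
Proof. by move/eqP; rewrite ff_zero => /divnK. Qed.

Lemma seg_nil k' i : seg k' i 0 = [::].
Proof. by []. Qed.

Lemma head_seg0 k' i a : ohead (map val (seg k' i a.+1)) = Some (ff k' i).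
Proof. by rewrite seg_cons /= val_inord_ff. Qed.

Lemma head_rev_seg0 k' i a : ohead (map val (rev (seg k' i a.+1))) = Some (ff k' (i + a)).
Proof. by rewrite rev_seg_cons /= val_inord_ff. Qed.

Lemma chain_rev_seg k' i a : sorted adj (map val (rev (seg k' i a))).
Proof. by rewrite map_rev; apply: chain_rev; exact: seg_chain. Qed.

Lemma cent k' n (x : word k'.+4) : 0 < n ->
  fb_eq (x ++ seg k' 0 (n * pp k')) (seg k' 0 (n * pp k') ++ x) ->
  exists j, fb_eq x (seg k' 0 (j * pp k')) \/ fb_eq x (seg k' 1 (j * pp k')).
Proof.
move=> Hn Hc.
case: (exists_red x) => y [Hxy Hy _].
suff [j Hj] : exists j, fb_eq y (seg k' 0 (j * pp k')) \/ fb_eq y (seg k' 1 (j * pp k')).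
  by exists j; case: Hj => H; [left|right]; exact: fb_trans Hxy H.
have Hcy : fb_eq (y ++ seg k' 0 (n * pp k')) (seg k' 0 (n * pp k') ++ y).
  apply: fb_trans (fb_catr _ (fb_sym Hxy)) _.
  apply: fb_trans Hc _; exact: fb_catl.
have Hcy1 : fb_eq (y ++ seg k' 1 (n * pp k')) (seg k' 1 (n * pp k') ++ y).
  by rewrite -rev_seg; exact: comm_rev.
case: (key Hn Hy Hcy) => m [t [Hmt H1]].
case: (key Hn Hy Hcy1) => m2 [s [Hms H2]].
have R1 : red (seg k' 0 m ++ rev (seg k' 0 t)).
  by apply: red_len Hy H1 _; rewrite size_cat size_rev !size_seg.
have R2 : red (seg k' 1 m2 ++ rev (seg k' 1 s)).
  by apply: red_len Hy H2 _; rewrite size_cat size_rev !size_seg.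
have H12 := fb_trans (fb_sym H1) H2.
move: Hmt Hms; case Ey: y => [|b y'] Hmt Hms.
  by exists 0; left; exact: fb_refl.
rewrite /= in Hmt Hms; rewrite -Ey.
case: m Hmt H1 R1 H12 => [|m] Hmt H1 R1 H12; case: m2 Hms H2 R2 H12 => [|m2] Hms H2 R2 H12.
- rewrite !seg_nil /= in H12 R2.
  rewrite add0n in Hmt; rewrite add0n in Hms.
  have E := chain_uniq (chain_rev_seg k' 0 t) R2 (fb_sym H12).
  have := congr1 (fun w => ohead (map val (rev w))) E.
  rewrite !revK Hmt Hms !head_seg0 ff0 ff1 => Hd; discriminate Hd.
- rewrite seg_nil /= in H12 R1 H1.
  rewrite add0n in Hmt.
  have E := chain_uniq (chain_rev_seg k' 0 t) R2 (fb_sym H12).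
  have := congr1 (fun w => ohead (map val (rev w))) E.
  rewrite rev_cat !revK Hmt head_seg0 ff0.
  case: s Hms E H2 R2 H12 => [|s] Hms E H2 R2 H12; last first.
    by rewrite head_seg ff1 => Hd; discriminate Hd.
  rewrite seg_nil /= head_rev_seg0 => -[] /ff_div Hd.
  exists ((1 + m2) %/ pp k'); right; rewrite -Hd add1n.
  by move: H2; rewrite seg_nil cats0.
- rewrite seg_nil /= in H12 R2 H2.
  rewrite add0n in Hms.
  have E := chain_uniq (chain_rev_seg k' 1 s) R1 H12.
  have := congr1 (fun w => ohead (map val (rev w))) E.
  rewrite rev_cat !revK Hms head_seg0 ff1.
  case: t Hmt E H1 R1 H12 => [|t] Hmt E H1 R1 H12; last first.
    by rewrite head_seg ff0 => Hd; discriminate Hd.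
  move=> _.
  have := congr1 (fun w => ohead (map val w)) E.
  rewrite seg_nil cats0 head_seg0 Hms head_rev_seg0 ff0 => -[] /esym /ff_div Hd.
  exists ((1 + size y') %/ pp k'); left; rewrite -Hd add1n -Hmt addn0.
  by move: H1; rewrite seg_nil cats0.
- have A0 : hitfirst 0 (map val (seg k' 0 m.+1 ++ rev (seg k' 0 t))).
    by apply: hit_head; rewrite head_seg ff0.
  have A1 : hitfirst 1 (map val (seg k' 0 m.+1 ++ rev (seg k' 0 t))).
    rewrite (red_hit 1 R1 R2 H12); apply: hit_head; by rewrite head_seg ff1.
  case: (hit_adj A0 A1).
Qed.

Lemma swapU a n x : foldr swap x (iota a n) =
  if (a <= x) && (x <= a + n) then (if x == a + n then a else x.+1) else x.
Proof.
elim: n a => [|n IH] a /=.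
  rewrite addn0; case: ifP => // H; have E : x = a by lia.
  by rewrite E eqxx.
rewrite IH /swap.
case H1: (a < x <= a.+1 + n); case H2: (x == a.+1 + n) => /=;
  do ! (case: ifP => ? ); lia.
Qed.

Lemma swapD a n x : foldr swap x (rev (iota a n)) =
  if (a <= x) && (x <= a + n) then (if x == a then a + n else x.-1) else x.
Proof.
elim: n => [|n IH].
  rewrite /= addn0; case: ifP => // H; have E : x = a by lia.
  by rewrite E eqxx.
have -> : iota a n.+1 = iota a n ++ [:: a + n] by rewrite -addn1 iotaD.
rewrite rev_cat /= IH /swap.
case H1: (a <= x <= a + n); case H2: (x == a) => /=;
  do ! (case: ifP => ? ); lia.
Qed.

Lemma gseq k' : map val (seg k' 0 (pp k')) = iota 0 k'.+3 ++ rev (iota 1 k'.+1).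
Proof.
rewrite seg_val.
have -> : pp k' = k'.+3 + k'.+1 by rewrite /pp; lia.
rewrite iotaD map_cat add0n; congr (_ ++ _).
  rewrite -[RHS]map_id; apply/eq_in_map => j; rewrite mem_iota => Hj.
  rewrite /ff modn_small /pp; lia.
apply: (@eq_from_nth _ 0); first by rewrite size_map size_rev !size_iota.
rewrite size_map size_iota => q Hq.
rewrite (nth_map 0) ?size_iota // nth_iota // nth_rev ?size_iota // nth_iota; last lia.
rewrite /ff modn_small /pp; lia.
Qed.

Definition sig3 k' x := foldr swap (foldr swap x (rev (iota 1 k'.+1))) (iota 0 k'.+3).

Lemma sig3_0 k' : sig3 k' 0 = 1.
Proof. rewrite /sig3 swapD swapU /=; try lia; do ! (case: ifP => ?); lia. Qed.
Lemma sig3_1 k' : sig3 k' 1 = k'.+3.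
Proof. rewrite /sig3 swapD swapU /=; try lia; do ! (case: ifP => ?); lia. Qed.
Lemma sig3_r k' : sig3 k' k'.+3 = 0.
Proof.
rewrite /sig3 swapD swapU /=.
have -> : (k'.+2 < 1 + k'.+1) = false by lia.
by rewrite add0n leqnn eqxx.
Qed.
Lemma sig3_o k' (x : nat) : x != 0 -> x != 1 -> x != k'.+3 -> sig3 k' x = x.
Proof.
move=> H0 H1 H3; rewrite /sig3 swapD swapU.
case E1: (1 <= x <= 1 + k'.+1); case E2: (x == 1) => /=; try lia;
  do ! (case: ifP => ?); lia.
Qed.

Lemma sig3_id k' x : sig3 k' (sig3 k' (sig3 k' x)) = x.
Proof.
case: (eqVneq x 0) => [->|H0]; first by rewrite sig3_0 sig3_1 sig3_r.
case: (eqVneq x 1) => [->|H1]; first by rewrite sig3_1 sig3_r sig3_0.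
case: (eqVneq x k'.+3) => [->|H3]; first by rewrite sig3_r sig3_0 sig3_1.
by rewrite !sig3_o.
Qed.

Lemma word_act_cat k (u v : word k) x : word_act (u ++ v) x = word_act u (word_act v x).
Proof. by rewrite /word_act foldr_cat. Qed.

Lemma word_act_val k (w : word k) x : word_act w x = foldr swap x (map val w).
Proof. by rewrite /word_act foldr_map. Qed.

Lemma word_act_g k' x : word_act (seg k' 0 (pp k')) x = sig3 k' x.
Proof. by rewrite word_act_val gseq foldr_cat. Qed.

Lemma gpow k' j : wpow (seg k' 0 (pp k')) j = seg k' 0 (j * pp k').
Proof. by have := wpow_seg k' 0 1 j; rewrite !mul1n. Qed.

Lemma PFB_g3 k' : PFB (seg k' 0 (3 * pp k')).
Proof.
move=> x _; rewrite -gpow /wpow /= cats0 !word_act_cat !word_act_g.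
exact: sig3_id.
Qed.

Lemma PFB_pow k (w : word k) j : PFB w -> PFB (wpow w j).
Proof.
move=> Hw x Hx; elim: j => [|j IH] //.
by rewrite wpowS word_act_cat IH Hw.
Qed.

Lemma sub_pow k (X : word k -> Prop) w n : fb_subgroup X -> X w -> X (wpow w n).
Proof.
case=> _ H0 Hc _ Hw; elim: n => [|n IH] //.
by rewrite wpowS; apply: Hc.
Qed.

Lemma gpow_ne k' j : 0 < j -> ~ fb_eq (seg k' 0 (j * pp k')) [::].
Proof.
move=> Hj H.
have := red_size (chain_red (seg_chain k' 0 (j * pp k'))) (isT : red ([::] : word k'.+4)) H.
rewrite size_seg /= => /eqP; rewrite muln_eq0 => /orP [] /eqP; first lia.
by have := pp_gt0 k'; lia.
Qed.

Lemma L_main k' (X Y : word k'.+4 -> Prop) N :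
  fb_subgroup X -> fb_subgroup Y ->
  (forall a b, X a -> Y b -> fb_eq (a ++ b) (b ++ a)) ->
  (forall z, X z -> Y z -> fb_eq z [::]) ->
  0 < N -> X (seg k' 0 (N * pp k')) -> infinite_elts Y -> False.
Proof.
move=> SX SY Hcomm Hint HN HX infY.
case: (infY [:: [::]]) => y [Hy Hy0].
have Hy0' : ~ fb_eq y [::] by apply: Hy0; rewrite mem_head.
have Hc : fb_eq (y ++ seg k' 0 (N * pp k')) (seg k' 0 (N * pp k') ++ y).
  exact: fb_sym (Hcomm _ _ HX Hy).
case: (cent HN Hc) => j Hj.
have HYg : Y (seg k' 0 (j * pp k')).
  case: SY => Ssat _ _ Srev.
  case: Hj => Hj; first exact: Ssat Hj Hy.
  apply: Ssat (Srev _ Hy).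
  by have := fb_rev Hj; rewrite -rev_seg revK.
case: j Hj HYg => [|j] Hj HYg.
  by case: Hj => Hj; apply: Hy0'.
have E1 : wpow (seg k' 0 (j.+1 * pp k')) N = seg k' 0 ((N * j.+1) * pp k').
  by rewrite -!gpow wpowM (mulnC N).
have E2 : wpow (seg k' 0 (N * pp k')) j.+1 = seg k' 0 ((N * j.+1) * pp k').
  by rewrite -!gpow wpowM.
have HYp := sub_pow N SY HYg; rewrite E1 in HYp.
have HXp := sub_pow j.+1 SX HX; rewrite E2 in HXp.
apply: (gpow_ne (j := N * j.+1)); first by rewrite muln_gt0 HN.
exact: Hint HXp HYp.
Qed.

Lemma php (T : eqType) (ts : seq T) (P : nat -> T -> Prop) :
  (forall j, j <= size ts -> exists2 t, t \in ts & P j t) ->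
  exists j1 j2 t, [/\ j1 < j2, P j1 t & P j2 t].
Proof.
move=> H.
case: (H 0 (leq0n _)) => t0 _ _.
have hex : forall j : 'I_(size ts).+1, exists i : 'I_(size ts), P j (nth t0 ts i).
  move=> j; case: (H j (ltn_ord j)) => t Ht HP.
  have Hi : index t ts < size ts by rewrite index_mem.
  exists (Ordinal Hi) => /=.
  by rewrite nth_index.
pose f := fun j => proj1_sig (constructive_indefinite_description _ (hex j)).
have Hf : forall j : 'I_(size ts).+1, P j (nth t0 ts (f j)).
  by move=> j; rewrite /f; case: constructive_indefinite_description.
apply: NNPP => Hno.
have Hinj : injective f.
  move=> x y Hxy; apply: val_inj.
  case: (ltngtP x y) => // Hl; exfalso; apply: Hno.
  - by exists x, y, (nth t0 ts (f x)); split => //; rewrite Hxy.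
  - by exists y, x, (nth t0 ts (f x)); split => //; rewrite Hxy.
by have := leq_card f Hinj; rewrite !card_ord ltnn.
Qed.

Lemma mem_gpow k' (Y : word k'.+4 -> Prop) y j : fb_subgroup Y -> Y y ->
  fb_eq y (seg k' 0 (j * pp k')) \/ fb_eq y (seg k' 1 (j * pp k')) ->
  Y (seg k' 0 (j * pp k')).
Proof.
case=> Ssat _ _ Srev Hy [] Hj; first exact: Ssat Hj Hy.
apply: Ssat (Srev _ Hy).
by have := fb_rev Hj; rewrite -rev_seg revK.
Qed.

Theorem corollary2p17 (k : nat) (hk : 4 <= k) :
  ~ virtually_product_of_two_infinite (@PFB k).
Proof.
case: k hk => [|[|[|[|k']]]] // _.
move=> [H [A [B [[HsH Hsub] [ts Hts] [SA SB [AH BH] [Hcomm Hint] Hdec] infA infB]]]].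
have Pj : forall j, PFB (seg k' 0 (j * (3 * pp k'))).
  by move=> j; rewrite -(wpow_seg k' 0 3 j); apply: PFB_pow; exact: PFB_g3.
have := php (ts := ts) (P := fun j t => exists h, H h /\ fb_eq (seg k' 0 (j * (3 * pp k'))) (t ++ h)).
case.
  by move=> j _; exact: Hts _ (Pj j).
move=> j1 [j2 [t [Hlt [h1 [Hh1 E1]] [h2 [Hh2 E2]]]]].
set d := j2 - j1.
have Esplit : seg k' 0 (j2 * (3 * pp k')) =
              seg k' 0 (j1 * (3 * pp k')) ++ seg k' 0 (d * (3 * pp k')).
  have -> : j2 * (3 * pp k') = j1 * (3 * pp k') + d * (3 * pp k').
    by rewrite -mulnDl /d subnKC // ltnW.
  by rewrite seg_cat mulnA seg_per.
have Hd : H (seg k' 0 (d * (3 * pp k'))).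
  case: HsH => Hsat _ Hcat Hrev.
  apply: Hsat (Hcat _ _ (Hrev _ Hh1) Hh2).
  set P1 := seg k' 0 (j1 * (3 * pp k')).
  set D := seg k' 0 (d * (3 * pp k')).
  have S1 : fb_eq (rev h1 ++ h2) (rev (t ++ h1) ++ (t ++ h2)).
    rewrite rev_cat -catA; apply: fb_catl; rewrite catA.
    by apply: fb_sym; have := fb_catr h2 (fb_revK t).
  have S2 : fb_eq (rev (t ++ h1) ++ (t ++ h2)) (rev P1 ++ (P1 ++ D)).
    rewrite -Esplit; exact: fb_cat (fb_rev (fb_sym E1)) (fb_sym E2).
  have S3 : fb_eq (rev P1 ++ (P1 ++ D)) D.
    by rewrite catA; have := fb_catr D (fb_revK P1).
  exact: fb_trans S1 (fb_trans S2 S3).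
have HN : 0 < d * 3 by rewrite muln_gt0 /d subn_gt0 Hlt.
rewrite mulnA in Hd.
case: (Hdec _ Hd) => a [b [Ha Hb Eab]].
have Hac : fb_eq (a ++ seg k' 0 (d * 3 * pp k')) (seg k' 0 (d * 3 * pp k') ++ a).
  apply: fb_trans (fb_catl a Eab) _.
  apply: fb_sym; apply: fb_trans (fb_catr a Eab) _.
  rewrite -catA; apply: fb_catl; exact: fb_sym (Hcomm _ _ Ha Hb).
case: (cent HN Hac) => j Hj.
case: j Hj => [|j] Hj.
  have Ha0 : fb_eq a [::] by case: Hj.
  have HB : B (seg k' 0 (d * 3 * pp k')).
    case: SB => Ssat _ _ _; apply: Ssat Hb.
    apply: fb_sym; apply: fb_trans Eab _; by have := fb_catr b Ha0.
  apply: (L_main SB SA _ _ HN HB infA).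
  - by move=> x y Bx Ay; apply: fb_sym; exact: Hcomm.
  - by move=> z Bz Az; exact: Hint.
apply: (L_main SA SB Hcomm Hint (ltn0Sn j) _ infB).
exact: mem_gpow SA Ha Hj.
Qed.
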